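(* Let $d\geq1$, $\lambda>0$, $\beta\geq 0$. Suppose $(T_0,Y_0)\in L^\infty_x(\mathbb{R}^d)\times L^\infty_x(\mathbb{R}^d)$ with $Y_0\geq 0$, and let $(T,Y)\in C^0_tL^\infty_x\times C^0_tL^\infty_x$ be a corresponding mild solution of the Cauchy problem below. Then for all $t$ at which the solution is defined, $$\|T(\cdot,t)\|_{L^\infty_x}\leq e^{-\lambda t}\|T_0\|_{L^\infty_x}+\lambda^{-1}\|Y_0\|_{L^\infty_x}.$$
   Context: The reaction rate is $r(T)=e^{-1/T}$ for $T>0$ and $r(T)=0$ for $T\leq 0$. The Cauchy problem is $T_t=(\Delta-\lambda)T+Yr(T)$, $Y_t=-\beta Y r(T)$, $T|_{t=0}=T_0$, $Y|_{t=0}=Y_0$ on $\mathbb{R}^d$. A pair $(T,Y)\in C^0_tL^\infty_x\times C^0_tL^\infty_x$ (continuous curves from the time interval into $L^\infty_x$) is a mild solution if for all $t$ in the time interval $$T(x,t)=e^{-\lambda t}e^{t\Delta}T_0+\int_0^t e^{-\lambda(t-\tau)}e^{(t-\tau)\Delta}\big(Y(\cdot,\tau)r(T(\cdot,\tau))\big)\,d\tau,\qquad Y(x,t)=Y_0(x)\exp\Big(-\beta\int_0^t r(T(x,\sigma))\,d\sigma\Big),$$ where $e^{t\Delta}$ is the heat semigroup on $\mathbb{R}^d$. *)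

(* Defs.v *)
From HB Require Import structures.
From mathcomp Require Import all_boot all_order all_algebra.
From mathcomp Require Import all_classical all_reals all_analysis.
Import Order.TTheory GRing.Theory Num.Theory.
Import numFieldNormedType.Exports.

Set Implicit Arguments.
Unset Strict Implicit.
Unset Printing Implicit Defensive.

Local Open Scope classical_set_scope.
Local Open Scope ring_scope.

(* Euclidean space R^(n.+1), encoded as the iterated product                *)
(*   ((R * R) * ...) * R   (n.+1 factors),                                  *)
(* The dimension d of the paper is n.+1 (so d >= 1 is built in).           *)
Fixpoint RdT (R : realType) (n : nat) : {k : measure_display & measurableType k} :=
  match n with
  | 0 => existT measurableType _ (measurableTypeR R)
  | m.+1 => existT measurableType _
              ((projT2 (RdT R m) * measurableTypeR R)%type : measurableType _)
  end.

Definition Rd (R : realType) (n : nat) : measurableType (projT1 (RdT R n)) :=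
  projT2 (RdT R n).

Fixpoint lebd (R : realType) (n : nat) : {measure set (Rd R n) -> \bar R} :=
  match n return {measure set (Rd R n) -> \bar R} with
  | 0 => (@lebesgue_measure R : {measure set (Rd R 0) -> \bar R})
  | m.+1 => (((lebd R m) \x (@lebesgue_measure R))%E
               : {measure set (Rd R m.+1) -> \bar R})
  end.

Fixpoint sqdist (R : realType) (n : nat) : Rd R n -> Rd R n -> R :=
  match n return Rd R n -> Rd R n -> R with
  | 0 => fun x y => ((x : R) - (y : R)) ^+ 2
  | m.+1 => fun x y => @sqdist R m x.1 y.1 + ((x.2 : R) - (y.2 : R)) ^+ 2
  end.

Definition Linf (R : realType) (n : nat) (f : Rd R n -> R) : \bar R :=
  Lnorm (lebd R n) +oo%E (fun x => (f x)%:E).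

Definition in_Linf (R : realType) (n : nat) (f : Rd R n -> R) : Prop :=
  measurable_fun [set: Rd R n] f /\ (Linf f < +oo)%E.

Definition heat_kernel (R : realType) (n : nat) (s : R) (x y : Rd R n) : R :=
  (Num.sqrt (4 * pi * s)) ^- n.+1 * expR (- (sqdist x y / (4 * s))).

(* Heat semigroup e^{s Delta} on R^d: convolution with the heat kernel for  *)
(* s > 0, and the identity for s = 0 (negative s is never used).            *)
Definition heat_sg (R : realType) (n : nat) (s : R) (f : Rd R n -> R)
    (x : Rd R n) : R :=
  if 0 < s then Rintegral (lebd R n) [set: Rd R n] (fun y => heat_kernel s x y * f y)
  else f x.

Definition rate (R : realType) (T : R) : R :=
  if 0 < T then expR (- T^-1) else 0.

Definition time_interval (R : realType) (I : set R) : Prop :=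
  I 0 /\ I `<=` `[0, +oo[ /\ (forall t, I t -> `[0, t] `<=` I).

Definition C0_Linf (R : realType) (n : nat) (I : set R) (u : R -> Rd R n -> R)
    : Prop :=
  (forall t, I t -> in_Linf (u t)) /\
  (forall t, I t -> forall e : R, 0 < e -> exists2 delta : R, 0 < delta &
     forall s, I s -> `|s - t| < delta ->
       (Linf (fun x => (u s x - u t x)%R) <= e%:E)%E).

(* Since T(., t), Y(., t) are elements of L^oo_x, the defining identities  *)
(* are required to hold for almost every x (for every t in I).              *)
Definition mild_solution (R : realType) (n : nat) (lambda beta : R)
    (T0 Y0 : Rd R n -> R) (I : set R) (T Y : R -> Rd R n -> R) : Prop :=
  C0_Linf I T /\ C0_Linf I Y /\
  (forall t, I t ->
    {ae lebd R n, forall x,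
      T t x = expR (- lambda * t) * heat_sg t T0 x
              + Rintegral (@lebesgue_measure R) `[0, t]
                  (fun tau => expR (- lambda * (t - tau)) *
                     heat_sg (t - tau) (fun y => Y tau y * rate (T tau y)) x)}) /\
  (forall t, I t ->
    {ae lebd R n, forall x,
      Y t x = Y0 x * expR (- beta *
                Rintegral (@lebesgue_measure R) `[0, t] (fun sigma => rate (T sigma x)))}).

(* Main.v *)
Require Import Defs.
From HB Require Import structures.
From mathcomp Require Import all_boot all_order all_algebra.
From mathcomp Require Import all_classical all_reals all_analysis.
From mathcomp Require Import ring lra measurable_realfun ess_sup_inf.
Import Order.TTheory GRing.Theory Num.Theory.
Import numFieldNormedType.Exports.
Local Open Scope classical_set_scope.
Local Open Scope ring_scope.

Set Implicit Arguments.
Unset Strict Implicit.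

Section sf.
Context (R : realType).
Lemma prod_sf d1 d2 (T1 : measurableType d1) (T2 : measurableType d2)
  (m1 : {sigma_finite_measure set T1 -> \bar R})
  (m2 : {sigma_finite_measure set T2 -> \bar R}) :
  sigma_finite setT (m1 \x m2)%E.
Proof.
have /sigma_finiteP[F [TF ndF Foo]] := sigma_finiteT m1.
have /sigma_finiteP[G [TG ndG Goo]] := sigma_finiteT m2.
exists (fun n => F n `*` G n).
 rewrite -setXTT TF TG predeqE => -[x y]; split.
    move=> [/= [n _ Fnx] [k _ Gky]]; exists (maxn n k) => //; split.
    - by move: x Fnx; exact/subsetPset/ndF/leq_maxl.
    - by move: y Gky; exact/subsetPset/ndG/leq_maxr.
  by move=> [n _ []/= ? ?]; split; exists n.
move=> k; have [? ?] := Foo k; have [? ?] := Goo k.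
split; first exact: measurableX.
by rewrite product_measure1E// lte_mul_pinfty// ge0_fin_numE.
Qed.

Definition lebdS_aux (n : nat) : {s : {sigma_finite_measure set (Rd R n) -> \bar R} |
   (s : set _ -> _) = lebd R n}.
Proof.
elim: n => [|m [s sE]].
  by exists (@lebesgue_measure R).
exists (HB.pack_for ({sigma_finite_measure set (Rd R m.+1) -> \bar R}) (s \x (@lebesgue_measure R))%E (Measure_isSigmaFinite.Build _ _ _ (s \x (@lebesgue_measure R))%E (prod_sf s (@lebesgue_measure R)))).
by rewrite /= sE.
Defined.

Definition lebdS n := proj1_sig (lebdS_aux n).
Lemma lebdSE n : (lebdS n : set _ -> _) = lebd R n.
Proof. exact: proj2_sig (lebdS_aux n). Qed.

Definition g1 (s a b : R) := (Num.sqrt (4*pi*s))^-1 * expR (- ((a - b)^+2 / (4*s))).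

Lemma heat_kernelS m s (x y : Rd R m.+1) :
  heat_kernel s x y = heat_kernel s x.1 y.1 * g1 s x.2 y.2.
Proof.
rewrite /heat_kernel /g1 /=.
rewrite mulrACA; congr (_ * _).
  by rewrite [in LHS]exprS invfM mulrC.
by rewrite -expRD mulrDl opprD.
Qed.

Lemma measurable_g1 s a : measurable_fun setT (g1 s a).
Proof.
apply: measurable_funM => //.
apply: measurableT_comp => //.
apply: measurableT_comp => //.
apply: measurable_funM => //.
apply: measurable_funX.
exact: measurable_funB.
Qed.

Lemma measurable_heat m s (x : Rd R m) : measurable_fun setT (heat_kernel s x).
Proof.
elim: m x => [|m IH] x.
  rewrite /heat_kernel /=.
  apply: measurable_funM => //.
  apply: measurableT_comp => //.
  apply: measurableT_comp => //.
  apply: measurable_funM => //.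
  apply: measurable_funX.
  exact: measurable_funB.
have -> : heat_kernel s x = (fun y : Rd R m.+1 => heat_kernel s x.1 y.1 * g1 s x.2 y.2).
  by apply/funext => y; rewrite heat_kernelS.
apply: measurable_funM.
  exact: measurableT_comp (IH x.1) measurable_fst.
exact: measurableT_comp (measurable_g1 s x.2) measurable_snd.
Qed.

Lemma int_g1 s a : 0 < s -> (\int[@lebesgue_measure R]_b (g1 s a b)%:E = 1)%E.
Proof.
move=> s0.
rewrite -(integral_normal_pdf a (Num.sqrt (2 * s))).
apply: eq_integral => b _; congr EFin.
have sg : Num.sqrt (2 * s) != 0 by rewrite gt_eqF // sqrtr_gt0 mulr_gt0.
rewrite /normal_pdf (negbTE sg) /normal_peak /normal_fun /g1.
have e : Num.sqrt (2 * s) ^+ 2 = 2 * s by rewrite sqr_sqrtr // mulr_ge0 // ltW.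
rewrite e; congr (_ * expR _).
  congr (_ ^-1); congr Num.sqrt; rewrite -mulr_natr; ring.
rewrite -mulr_natr mulNr; congr (- _); rewrite -sqrrN opprB; congr (_ / _); ring.
Qed.
Lemma int_heat m s (x : Rd R m) : 0 < s ->
  (\int[lebd R m]_y (heat_kernel s x y)%:E = 1)%E.
Proof.
move=> s0; elim: m x => [|m IH] x.
  exact: int_g1.
have -> : (lebd R m.+1 : set _ -> _) = ((lebdS m) \x (@lebesgue_measure R))%E.
  by rewrite lebdSE.
rewrite (fubini_tonelli1 (m1 := lebdS m) (m2 := @lebesgue_measure R)).
- rewrite /fubini_F.
  transitivity (\int[lebdS m]_y (heat_kernel s x.1 y)%:E)%E; last by rewrite lebdSE IH.
  apply: eq_integral => y _.
  transitivity (\int[@lebesgue_measure R]_z ((heat_kernel s x.1 y)%:E * (g1 s x.2 z)%:E))%E.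
    by apply: eq_integral => z _; rewrite (heat_kernelS s x (y, z)) EFinM.
  rewrite ge0_integralZl //.
  + by rewrite int_g1 // mule1.
  + by apply: measurableT_comp => //; exact: measurable_g1.
  + by move=> b _; rewrite lee_fin mulr_ge0 // ?invr_ge0 ?sqrtr_ge0 ?expR_ge0.
  + rewrite lee_fin /heat_kernel mulr_ge0 // ?expR_ge0 // invr_ge0 exprn_ge0 // sqrtr_ge0 //.
- apply: measurableT_comp => //; exact: (@measurable_heat m.+1 s x).
- by move=> z; rewrite lee_fin /heat_kernel mulr_ge0 // ?expR_ge0 // invr_ge0 exprn_ge0 // sqrtr_ge0 //.
Qed.

Lemma heat_ge0 m s (x y : Rd R m) : 0 <= heat_kernel s x y.
Proof. by rewrite /heat_kernel mulr_ge0 // ?expR_ge0 // invr_ge0 exprn_ge0 // sqrtr_ge0. Qed.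

Lemma fine_bound (e : \bar R) M : (`|e| <= M%:E)%E -> `|fine e| <= M.
Proof. by case: e => [r| |] //=; rewrite lee_fin. Qed.

Lemma heat_bound m s (f : Rd R m -> R) M (x : Rd R m) : 0 < s -> 0 <= M ->
  measurable_fun setT f -> {ae lebd R m, forall y, `|f y| <= M} ->
  `|heat_sg s f x| <= M.
Proof.
move=> s0 M0 mf fM.
rewrite /heat_sg s0 /Rintegral; apply: fine_bound.
have mh : measurable_fun setT (fun y => heat_kernel s x y * f y).
  by apply: measurable_funM => //; exact: measurable_heat.
apply: le_trans (le_abse_integral _ _ _) _ => //.
  by apply: measurableT_comp => //.
apply: (@le_trans _ _ (\int[lebd R m]_y ((heat_kernel s x y)%:E * M%:E))%E).
  apply: ae_ge0_le_integral => //.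
  - apply: measurableT_comp => //; apply: measurableT_comp => //.
  - by move=> y _; rewrite -EFinM lee_fin mulr_ge0 // heat_ge0.
  - by apply: measurableT_comp => //; apply: measurable_funM => //; exact: measurable_heat.
  - apply: filterS fM => y fy _ /=.
    by rewrite -EFinM lee_fin normrM ger0_norm ?heat_ge0 // ler_wpM2l // heat_ge0.
rewrite ge0_integralZr //.
- by rewrite int_heat // mul1e.
- by apply: measurableT_comp => //; exact: measurable_heat.
- by move=> y _; rewrite lee_fin heat_ge0.
Qed.

Lemma gen_le_integral d (T : measurableType d) (mu : {measure set T -> \bar R})
  (D : set T) (f1 f2 : T -> \bar R) :
  (forall x, D x -> (0 <= f1 x)%E) -> (forall x, D x -> (f1 x <= f2 x)%E) ->
  (\int[mu]_(x in D) f1 x <= \int[mu]_(x in D) f2 x)%E.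
Proof.
move=> f10 f12.
have f20 : forall x, D x -> (0 <= f2 x)%E by move=> x Dx; exact: le_trans (f10 x Dx) (f12 x Dx).
rewrite !ge0_integralE //; apply: ereal_sup_le.
move=> _ [h hf <-]; exists h => // x; apply: le_trans (hf x) _.
by rewrite /patch; case: ifP => // /set_mem Dx; exact: f12.
Qed.

Lemma Rint_bound d (T : measurableType d) (mu : {measure set T -> \bar R})
  (D : set T) (h g : T -> R) :
  (\int[mu]_(x in D) (g x)%:E < +oo)%E ->
  (forall x, D x -> `|h x| <= g x) ->
  `|Rintegral mu D h| <= fine (\int[mu]_(x in D) (g x)%:E).
Proof.
move=> gfin hg.
have g0 : forall x, D x -> 0 <= g x by move=> x Dx; exact: le_trans (normr_ge0 _) (hg x Dx).
have G0 : (0 <= \int[mu]_(x in D) (g x)%:E)%E by apply: integral_ge0 => x Dx; rewrite lee_fin g0.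
rewrite /Rintegral integralE.
have Hp : (\int[mu]_(x in D) ((EFin \o h)^\+ x) <= \int[mu]_(x in D) (g x)%:E)%E.
  apply: gen_le_integral => x Dx; first exact: funepos_ge0.
  rewrite funeposE /= ge_max !lee_fin g0 // andbT.
  exact: le_trans (ler_norm _) (hg x Dx).
have Hn : (\int[mu]_(x in D) ((EFin \o h)^\- x) <= \int[mu]_(x in D) (g x)%:E)%E.
  apply: gen_le_integral => x Dx; first exact: funeneg_ge0.
  rewrite funenegE /= ge_max !lee_fin g0 // andbT.
  apply: le_trans (hg x Dx); rewrite -normrN; exact: ler_norm.
have P0 : (0 <= \int[mu]_(x in D) ((EFin \o h)^\+ x))%E by apply: integral_ge0 => x _; exact: funepos_ge0.
have N0 : (0 <= \int[mu]_(x in D) ((EFin \o h)^\- x))%E by apply: integral_ge0 => x _; exact: funeneg_ge0.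
move: Hp Hn P0 N0 gfin G0.
case: (\int[mu]_(x in D) ((EFin \o h)^\+ x))%E => [a| |]; 
case: (\int[mu]_(x in D) ((EFin \o h)^\- x))%E => [b| |];
case: (\int[mu]_(x in D) (g x)%:E)%E => [G| |] //=; rewrite ?lee_fin.
move=> aG bG a0 b0 _ G0'.
rewrite ler_norml; apply/andP; split; lra.
Qed.

Lemma exp_int (l t : R) : 0 < l -> 0 <= t ->
  (\int[@lebesgue_measure R]_(tau in `[0%R, t]) (expR (- l * (t - tau)))%:E
    = ((1 - expR (- l * t)) / l)%:E)%E.
Proof.
move=> l0; rewrite le_eqVlt => /predU1P[<-|t0].
  by rewrite set_itv1 integral_set1 mulr0 expR0 subrr mul0r.
have hp := exponential_prob_itv0c (- l) t0.
rewrite /exponential_prob in hp.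
have E : forall tau, 0 <= tau -> expR (- l * (t - tau)) = (expR (- l * t) / l) * (- exponential_pdf (- l) tau).
  move=> tau tau0; rewrite exponential_pdfE //.
  rewrite opprK -mulNr opprK mulrA divfK ?gt_eqF // -expRD; congr expR; ring.
transitivity (\int[@lebesgue_measure R]_(tau in `[0%R, t]) ((expR (- l * t) / l)%:E * (- exponential_pdf (- l) tau)%:E))%E.
  apply: eq_integral => tau; rewrite inE /= in_itv /= => /andP[tau0 _].
  by rewrite -EFinM E.
rewrite ge0_integralZl //; last 3 first.
- apply: measurableT_comp => //; apply: measurableT_comp => //.
  exact: measurable_funS (measurable_exponential_pdf _).
- move=> tau; rewrite /= in_itv /= => /andP[tau0 _].
  rewrite lee_fin exponential_pdfE // opprK -mulNr opprK mulr_ge0 // ?ltW // expR_ge0.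
- by rewrite lee_fin divr_ge0 ?expR_ge0 // ltW.
have -> : (\int[@lebesgue_measure R]_(tau in `[0%R, t]) (- exponential_pdf (- l) tau)%:E
   = - (\int[@lebesgue_measure R]_(tau in `[0%R, t]) (exponential_pdf (- l) tau)%:E))%E.
  have H := @integral_ge0N _ _ R (@lebesgue_measure R) `[0%R, t]
     (fun tau => (- exponential_pdf (- l) tau)%:E).
  rewrite -[LHS]oppeK; congr (- _)%E.
  rewrite -H; last first.
    move=> tau; rewrite /= in_itv /= => /andP[tau0 _].
    by rewrite lee_fin exponential_pdfE // opprK -mulNr opprK mulr_ge0 // ?ltW // expR_ge0.
  by apply: eq_integral => tau _; rewrite /= ?EFinN ?oppeK ?opprK.
rewrite hp -EFinB -EFinN -EFinM; congr EFin.
rewrite opprK opprB mulrBr mulr1 mulrAC -expRD mulNr addNr expR0 mulrBl.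
done.
Qed.

Lemma rate_ge0 (x : R) : 0 <= rate x.
Proof. by rewrite /rate; case: ifP => // _; exact: expR_ge0. Qed.

Lemma rate_le1 (x : R) : rate x <= 1.
Proof.
rewrite /rate; case: ifP => // x0.
by rewrite -expR0 ler_expR oppr_le0 invr_ge0 ltW.
Qed.

Lemma measurable_rate : measurable_fun setT (@rate R).
Proof.
apply: nondecreasing_measurable => // a b ab.
rewrite /rate; case: ifP => a0; case: ifP => b0 //.
- by rewrite ler_expR lerN2 lef_pV2 // posrE.
- by move: (lt_le_trans a0 ab); rewrite b0.
Qed.

Lemma LinfE m (f : Rd R m -> R) : Linf f =
  if (0 < lebd R m [set: Rd R m])%E then ess_sup (lebd R m) (abse \o (fun x => (f x)%:E)) else 0%E.
Proof. by rewrite /Linf unlock. Qed.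

Lemma ae_trivial m (P : Rd R m -> Prop) : ~ (0 < lebd R m [set: Rd R m])%E ->
  {ae lebd R m, forall x, P x}.
Proof.
move=> h; exists setT; split => //.
apply/eqP; rewrite eq_le measure_ge0 andbT; rewrite leNgt; exact/negP.
Qed.

Lemma Linf_bound m (f : Rd R m -> R) :
  {ae lebd R m, forall x, ((`|f x|)%:E <= Linf f)%E}.
Proof.
rewrite LinfE; case: ifP => [h|/negP h]; last exact: ae_trivial.
exact: ess_sup_ge.
Qed.

Lemma Linf_le m (f : Rd R m -> R) (B : R) : 0 <= B ->
  {ae lebd R m, forall x, `|f x| <= B} -> (Linf f <= B%:E)%E.
Proof.
move=> B0 fB; rewrite LinfE; case: ifP => [h|_]; last by rewrite lee_fin.
apply/ess_supP; apply: filterS fB => x /= fx; by rewrite lee_fin.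
Qed.

Lemma Yrate_bound (y0 yv r b J MY : R) : `|y0| <= MY -> 0 <= b -> 0 <= J ->
  yv = y0 * expR (- b * J) -> `|yv * rate r| <= MY.
Proof.
move=> y0M b0 J0 ->.
rewrite normrM normrM (ger0_norm (expR_ge0 _)) (ger0_norm (rate_ge0 _)).
apply: le_trans y0M; rewrite -mulrA ler_piMr //.
apply: mulr_ile1; [exact: expR_ge0|exact: rate_ge0| |exact: rate_le1].
by rewrite -expR0 ler_expR mulNr oppr_le0 mulr_ge0.
Qed.
End sf.

Unset Implicit Arguments.
Set Strict Implicit.

Theorem proposition2p5 (R : realType) (n : nat) (lambda beta : R)
    (T0 Y0 : Rd R n -> R) (I : set R) (T Y : R -> Rd R n -> R) :
  0 < lambda -> 0 <= beta ->
  in_Linf T0 -> in_Linf Y0 ->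
  {ae lebd R n, forall x, 0 <= Y0 x} ->
  time_interval I ->
  mild_solution lambda beta T0 Y0 I T Y ->
  forall t, I t ->
    (Linf (T t) <= (expR (- lambda * t)%R)%:E * Linf T0 + (lambda^-1)%:E * Linf Y0)%E.
Proof.
move=> l0 b0 [mT0 T0fin] [mY0 Y0fin] _ [I0 [Ipos Iint]]
  [[CT1 _] [[CY1 _] [Tmild Ymild]]] t It.
have t0 : 0 <= t by have := Ipos t It; rewrite /= in_itv /= andbT.
set M0 := fine (Linf T0); set MY := fine (Linf Y0).
have M0E : Linf T0 = M0%:E.
  by rewrite /M0 fineK // ge0_fin_numE // /Linf Lnorm_ge0.
have MYE : Linf Y0 = MY%:E.
  by rewrite /MY fineK // ge0_fin_numE // /Linf Lnorm_ge0.
have M00 : 0 <= M0 by rewrite -lee_fin -M0E /Linf Lnorm_ge0.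
have MY0 : 0 <= MY by rewrite -lee_fin -MYE /Linf Lnorm_ge0.
have A1 : {ae lebd R n, forall x, `|T0 x| <= M0}.
  by apply: filterS (Linf_bound T0) => x; rewrite M0E lee_fin.
have A2 : {ae lebd R n, forall x, `|Y0 x| <= MY}.
  by apply: filterS (Linf_bound Y0) => x; rewrite MYE lee_fin.
have Yb : forall tau, I tau -> {ae lebd R n, forall y, `|Y tau y * rate (T tau y)| <= MY}.
  move=> tau Itau.
  apply: filterS2 A2 (Ymild tau Itau) => y y0M Yy.
  apply: Yrate_bound y0M b0 _ Yy.
  by apply: Rintegral_ge0 => s _; exact: rate_ge0.
rewrite M0E MYE -EFinM -EFinM -EFinD.
apply: Linf_le; first by rewrite addr_ge0 // mulr_ge0 // ?expR_ge0 // invr_ge0 ltW.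
have A12 : {ae lebd R n, forall x, `|T0 x| <= M0 /\ `|Y t x * rate (T t x)| <= MY}.
  by apply: filterS2 A1 (Yb t It) => x a b; split.
apply: filterS2 A12 (Tmild t It) => x [T0x Ytx] ->.
set g := fun tau : R => expR (- lambda * (t - tau)) * MY.
have gint : (\int[@lebesgue_measure R]_(tau in `[0%R, t]) (g tau)%:E
    = (((1 - expR (- lambda * t)) / lambda) * MY)%:E)%E.
  rewrite /g; under eq_integral do rewrite EFinM.
  rewrite ge0_integralZr //; first by rewrite exp_int // -EFinM.
  apply: measurableT_comp => //; apply: measurableT_comp => //.
  apply: measurable_funM => //; apply: measurable_funB => //.
have hb : `|heat_sg t T0 x| <= M0.
  case: (ltrP 0 t) => [tpos|t0'].
    exact: heat_bound.
  by rewrite /heat_sg ltNge t0' /=.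
have Ib : `|Rintegral (@lebesgue_measure R) `[0, t]
   (fun tau => expR (- lambda * (t - tau)) *
     heat_sg (t - tau) (fun y => Y tau y * rate (T tau y)) x)|
   <= ((1 - expR (- lambda * t)) / lambda) * MY.
  rewrite -[X in _ <= X]/(fine ((((1 - expR (- lambda * t)) / lambda) * MY)%:E)) -gint.
  apply: Rint_bound; first by rewrite gint ltry.
  move=> tau; rewrite /= in_itv /= => /andP[tau0 taut].
  rewrite /g normrM ger0_norm ?expR_ge0 // ler_wpM2l ?expR_ge0 //.
  move: taut; rewrite le_eqVlt => /predU1P[->|taut].
    by rewrite subrr /heat_sg ltxx.
  have Itau : I tau by apply: (Iint t It); rewrite /= in_itv /= tau0 ltW.
  apply: heat_bound => //; first by rewrite subr_gt0.
    apply: measurable_funM; first exact: (CY1 tau Itau).1.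
    apply: measurableT_comp; first exact: measurable_rate.
    exact: (CT1 tau Itau).1.
  exact: Yb.
apply: le_trans (ler_normD _ _) _.
apply: lerD.
  by rewrite normrM ger0_norm ?expR_ge0 // ler_wpM2l ?expR_ge0.
apply: le_trans Ib _.
rewrite mulrAC [_^-1 * _]mulrC ler_wpM2r //; first by rewrite invr_ge0 ltW.
by rewrite ler_piMl // lerBlDr lerDl expR_ge0.
Qed.
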